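(* Let $F$ be a field of characteristic zero, let $\mathcal{Z}=\langle z\rangle$ be the infinite cyclic group, and let $\mathfrak{S}$ be a Schur ring over $\mathcal{Z}$. If $C\in\mathcal{D}(\mathfrak{S})$ is a primitive set with $z\in C$, then $C=\{z\}$ or $C=\{z,z^{-1}\}$.
   Context: For finite $C\subseteq G$, $\overline{C}=\sum_{g\in C}g\in F[G]$ and $C^*=\{g^{-1}\mid g\in C\}$. A Schur ring over a group $G$ is an $F$-subspace $\mathfrak{S}=\operatorname{Span}_F\{\overline{C}\mid C\in\mathcal{D}(\mathfrak{S})\}$ of $F[G]$ where $\mathcal{D}(\mathfrak{S})$ is a partition of $G$ into finite sets (the primitive sets) such that (i) $\{1\}\in\mathcal{D}(\mathfrak{S})$; (ii) $C\in\mathcal{D}(\mathfrak{S})\Rightarrow C^*\in\mathcal{D}(\mathfrak{S})$; (iii) for all $C,D\in\mathcal{D}(\mathfrak{S})$, $\overline{C}\,\overline{D}=\sum_{E}\lambda_{CDE}\overline{E}$ with finitely many nonzero $\lambda_{CDE}\in F$. *)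

(* Defs.v *)
From HB Require Import structures.
From mathcomp Require Import all_boot all_order all_algebra.
From mathcomp Require Import finmap.
Set Implicit Arguments. Unset Strict Implicit. Unset Printing Implicit Defensive.
Import Order.TTheory GRing.Theory Num.Theory.
Local Open Scope fset_scope.
Local Open Scope ring_scope.

(* The infinite cyclic group Z = <z> is modelled as (int, +) with z = 1,
   z^{-1} = -1, z^k = k. *)

Definition finv (C : {fset int}) : {fset int} := [fset - x | x in C].

(* coefficient of g in  C-bar * D-bar  in F[Z] *)
Definition prod_coef (F : nzRingType) (C D : {fset int}) (g : int) : F :=
  (\sum_(c <- C) \sum_(d <- D) nat_of_bool ((c + d)%R == g))%N%:R.

Definition is_partition (D : {fset int} -> Prop) : Prop :=
  (forall C, D C -> C != fset0) /\
  (forall g : int, exists C, D C /\ g \in C) /\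
  (forall C1 C2 (g : int), D C1 -> D C2 -> g \in C1 -> g \in C2 -> C1 = C2).

(* D is the set of primitive sets D(S) of a Schur ring S over Z with
   coefficients in F: conditions (i)-(iii) of the definition. *)
Definition schur_partition (F : nzRingType) (D : {fset int} -> Prop) : Prop :=
  [/\ is_partition D,
      D [fset 0%R],
      (forall C, D C -> D (finv C)) &
      (forall C1 C2, D C1 -> D C2 ->
         exists (Es : seq {fset int}) (lam : {fset int} -> F),
           (forall E, E \in Es -> D E) /\
           forall g : int,
             prod_coef F C1 C2 g = \sum_(E <- Es) lam E *+ (g \in E))].

(* Main.v *)
Require Import Defs.
From HB Require Import structures.
From mathcomp Require Import all_boot all_order all_algebra.
From mathcomp Require Import finmap.
From mathcomp Require Import zify ring.
From Stdlib Require Import ClassicalEpsilon Classical.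
Import Order.TTheory GRing.Theory Num.Theory.
Local Open Scope fset_scope.
Local Open Scope ring_scope.

Definition pcn (X Y : {fset int}) (g : int) : nat :=
  (\sum_(c <- X) \sum_(d <- Y) nat_of_bool ((c + d)%R == g))%N.

Lemma natr_inj (F : fieldType) (charF0 : [pchar F] =i pred0) (a b : nat) :
  (a%:R : F) = b%:R -> a = b.
Proof.
have H := (pcharf0P F).1 charF0.
wlog le : a b / (a <= b)%N.
  move=> W E; case: (leqP a b) => h; first exact: W.
  by symmetry; apply: W => //; exact: ltnW.
move=> E; move/subnK: le => Eb; rewrite -Eb natrD in E.
have := congr1 (fun x => x - a%:R) E; rewrite subrr addrK => /esym/eqP.
by rewrite H => /eqP h0; rewrite -Eb h0.
Qed.

Lemma blk_uniq (D : {fset int} -> Prop) (HD : is_partition D) E1 E2 g :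
  D E1 -> D E2 -> g \in E1 -> g \in E2 -> E1 = E2.
Proof. by case: HD => _ [_ H]; apply: H. Qed.
Arguments blk_uniq {D} HD {E1 E2 g}.

Definition blockconst (D : {fset int} -> Prop) (phi : int -> nat) :=
  forall E g h, D E -> g \in E -> h \in E -> phi g = phi h.

Lemma pcn_const (F : fieldType) (charF0 : [pchar F] =i pred0)
  (D : {fset int} -> Prop) (HS : schur_partition F D) X Y :
  D X -> D Y -> blockconst D (pcn X Y).
Proof.
case: HS => HP _ _ Hprod DX DY E g h DE gE hE.
have [Es [lam [HEs Hc]]] := Hprod X Y DX DY.
apply: (@natr_inj F charF0).
have -> : ((pcn X Y g)%:R : F) = prod_coef F X Y g.
  by rewrite /prod_coef /pcn.
have -> : ((pcn X Y h)%:R : F) = prod_coef F X Y h.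
  by rewrite /prod_coef /pcn.
rewrite !Hc; apply: eq_big_seq => E' /HEs DE'.
congr (_ *+ _).
case gE': (g \in E'); case hE': (h \in E') => //.
all: first [ move: (blk_uniq HP DE DE' gE gE') => eq; rewrite -eq in hE'; congruence
            | move: (blk_uniq HP DE DE' hE hE') => eq; rewrite -eq in gE'; congruence ].
Qed.
Arguments pcn_const {F} charF0 {D} HS {X Y}.

Definition blk (D : {fset int} -> Prop) (Hcov : forall g : int, exists C, D C /\ g \in C)
  (g : int) : {fset int} := proj1_sig (constructive_indefinite_description _ (Hcov g)).

Arguments blk {D}.
Lemma blkP D Hcov g : D (@blk D Hcov g) /\ g \in @blk D Hcov g.
Proof. by rewrite /blk; case: constructive_indefinite_description. Qed.
Arguments blkP {D}.

Lemma head_in (D : {fset int} -> Prop) (HD : is_partition D) E :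
  D E -> head 0 (E : seq int) \in E.
Proof.
case: HD => Hne _ /Hne; case eqE: (E : seq int) => [|x s].
  move/eqP => H; exfalso; apply: H; apply/fsetP => y; rewrite in_fset0.
  by rewrite -[y \in E]/(y \in (E : seq int)) eqE.
by move=> _; rewrite -[_ \in E]/(_ \in (E : seq int)) eqE /= mem_head.
Qed.

Arguments head_in {D} HD {E}.
Lemma sum_eq_count (s : seq int) y : uniq s ->
  (\sum_(e <- s) nat_of_bool (e == y))%N = (y \in s).
Proof.
move=> us; rewrite -(count_uniq_mem y us) -sum1_count [RHS]big_mkcond /=.
by apply: eq_bigr => e _; case: (e == y).
Qed.

Lemma pcn_alt X C g : pcn X C g = (\sum_(d <- C) nat_of_bool ((g - d)%R \in X))%N.
Proof.
rewrite /pcn exchange_big /=; apply: eq_bigr => d _.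
rewrite -sum_eq_count ?fset_uniq //; apply: eq_bigr => e _.
congr nat_of_bool; apply/idP/idP => /eqP h; apply/eqP; lia.
Qed.

Lemma conv_const (F : fieldType) (charF0 : [pchar F] =i pred0)
  (D : {fset int} -> Prop) (HS : schur_partition F D) C (DC : D C)
  (phi : int -> nat) (S : seq int) (Hsup : forall x, phi x != 0%N -> x \in S)
  (Hphi : blockconst D phi) :
  blockconst D (fun g => \sum_(c <- C) phi (g - c)%R)%N.
Proof.
have HP : is_partition D by case: HS.
have Hcov : forall g : int, exists C, D C /\ g \in C by case: HP => _ [].
set Bs := undup [seq blk Hcov s | s <- S].
have DB : forall E, E \in Bs -> D E.
  by move=> E; rewrite mem_undup => /mapP [s _ ->]; case: (blkP Hcov s).
pose v E := phi (head 0 (E : seq int)).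
have decomp : forall x, phi x = (\sum_(E <- Bs) v E * nat_of_bool (x \in E))%N.
  move=> x; case xS: (x \in S).
    have bx : blk Hcov x \in Bs by rewrite mem_undup; apply/mapP; exists x.
    rewrite (bigD1_seq (blk Hcov x)) ?undup_uniq //= (blkP Hcov x).2 muln1.
    rewrite big1_seq ?addn0.
      case: (blkP Hcov x) => Db xb.
      exact: (Hphi _ _ _ Db xb (head_in HP Db)).
    move=> E /andP [nE EB]; case xE: (x \in E); last by rewrite muln0.
    by move: nE; rewrite (blk_uniq HP (DB _ EB) (blkP Hcov x).1 xE (blkP Hcov x).2) eqxx.
  have -> : phi x = 0%N by apply/eqP; apply: contraFT xS; apply: Hsup.
  rewrite big1_seq // => E /andP [_ EB]; case xE: (x \in E); last by rewrite muln0.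
  rewrite /v (Hphi _ _ x (DB _ EB) (head_in HP (DB _ EB)) xE).
  by have -> : phi x = 0%N by apply/eqP; apply: contraFT xS; apply: Hsup.
have main : forall g, (\sum_(c <- C) phi (g - c)%R)%N = (\sum_(E <- Bs) v E * pcn E C g)%N.
  move=> g; rewrite (eq_bigr _ (fun c _ => decomp (g - c))) exchange_big /=.
  by apply: eq_bigr => E _; rewrite -big_distrr /= pcn_alt.
move=> E g h DE gE hE; rewrite !main; apply: eq_big_seq => E' /DB DE'.
by congr (_ * _)%N; exact: (pcn_const charF0 HS DE' DC _ _ _ DE gE hE).
Qed.
Arguments conv_const {F} charF0 {D} HS {C} DC {phi} S.

Fixpoint cnt (C : seq int) (n : nat) (g : int) : nat :=
  if n is k.+1 then (\sum_(c <- C) cnt C k (g - c)%R)%N else nat_of_bool (g == 0).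

Fixpoint sup (C : seq int) (n : nat) : seq int :=
  if n is k.+1 then [seq x + c | x <- sup C k, c <- C] else [:: 0].

Lemma sum_pos (s : seq int) (F : int -> nat) :
  (0 < \sum_(x <- s) F x)%N -> exists2 x, x \in s & (0 < F x)%N.
Proof.
elim: s => [|a s IH]; first by rewrite big_nil.
rewrite big_cons; case: (posnP (F a)) => Fa.
  by rewrite Fa add0n => /IH [x xs Fx]; exists x => //; rewrite inE xs orbT.
by move=> _; exists a => //; rewrite mem_head.
Qed.

Lemma one_le (s : seq int) (F : int -> nat) a :
  a \in s -> (F a <= \sum_(x <- s) F x)%N.
Proof. by move=> aS; rewrite (big_rem a) //= leq_addr. Qed.
Arguments one_le {s} F {a}.

Lemma two_le (s : seq int) (F : int -> nat) a b :
  uniq s -> a \in s -> b \in s -> a != b -> (F a + F b <= \sum_(x <- s) F x)%N.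
Proof.
move=> us aS bS ab; rewrite (big_rem a) //= leq_add2l.
apply: one_le; rewrite (mem_rem_uniq _ us) /= inE bS andbT.
by rewrite eq_sym.
Qed.
Arguments two_le {s} F {a b}.

Lemma cnt_sup C n g : cnt C n g != 0%N -> g \in sup C n.
Proof.
elim: n g => [|n IH] g /=.
  by case: (g =P 0) => // ->; rewrite mem_head.
rewrite -lt0n => /sum_pos [c cC]; rewrite lt0n => /IH h.
have -> : g = (g - c) + c by rewrite subrK.
exact: (allpairs_f (fun x c => x + c) h cC).
Qed.

Lemma cnt_step C n g c : c \in C -> (0 < cnt C n g)%N -> (0 < cnt C n.+1 (g + c))%N.
Proof.
move=> cC h /=; have := one_le (fun d => cnt C n (g + c - d)) cC.
by rewrite /= addrK => H; exact: leq_trans h H.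
Qed.

Arguments cnt_step {C n g c}.
Lemma cnt_rep C n g c a : c \in C -> (0 < cnt C n g)%N -> (0 < cnt C (n + a) (g + c *+ a))%N.
Proof.
move=> cC h; elim: a => [|a IH]; first by rewrite addn0 mulr0n addr0.
by rewrite addnS mulrS (addrC c) addrA; apply: cnt_step.
Qed.

Arguments cnt_rep {C n g c} a.
Lemma cnt00 C : cnt C 0 0 = 1%N. Proof. by []. Qed.

Lemma cnt_le C M n g : (forall c, c \in C -> c <= M) -> cnt C n g != 0%N -> g <= M *+ n.
Proof.
move=> HM; elim: n g => [|n IH] g /=.
  by case: (g =P 0) => // ->.
rewrite -lt0n => /sum_pos [c cC]; rewrite lt0n => /IH h.
have := HM c cC; rewrite mulrS; lia.
Qed.

Arguments cnt_le {C M n g}.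
Lemma cnt_top C M n : uniq C -> M \in C -> (forall c, c \in C -> c <= M) ->
  cnt C n (M *+ n) = 1%N.
Proof.
move=> uC MC HM; elim: n => [|n IH] /=; first by rewrite ?mulr0n ?eqxx.
rewrite (big_rem M) //= mulrS addrC addrK IH big1_seq ?addn0 //.
move=> c /andP [_ cr]; apply/eqP; apply: contraTT isT => /(cnt_le HM).
have := HM c (mem_rem cr).
have : c != M by move: cr; rewrite (mem_rem_uniq _ uC) /= inE => /andP [].
lia.
Qed.

Lemma cnt_one C n g : uniq C -> cnt C n.+1 g = 1%N -> exists2 c, c \in C & g = c *+ n.+1.
Proof.
move=> uC; elim: n g => [|n IH] g.
  move=> h; have : (0 < cnt C 1 g)%N by rewrite h.
  move=> /sum_pos [c cC] /=; case: (g - c =P 0) => // e _.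
  by exists c => //; rewrite mulr1n; lia.
move=> h; have : (0 < cnt C n.+2 g)%N by rewrite h.
move=> /sum_pos [c0 c0C] pos0.
change (is_true (0 < cnt C n.+1 (g - c0)%R)%N) in pos0.
have le1 : (cnt C n.+1 (g - c0)%R <= 1)%N.
  by rewrite -h; apply: (one_le (fun d => cnt C n.+1 (g - d)%R) c0C).
have e0 : cnt C n.+1 (g - c0)%R = 1%N by apply/eqP; rewrite eqn_leq le1 pos0.
have [c1 c1C e1] := IH (g - c0)%R e0.
case: (c1 =P c0) => [E|ne].
  by exists c0 => //; move: e1; rewrite E [c0 *+ n.+2]mulrS; lia.
have pos1 : (0 < cnt C n.+1 (g - c1)%R)%N.
  have := cnt_rep n c1C (cnt_step c0C (isT : (0 < cnt C 0 0)%N)).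
  rewrite add1n add0r.
  have -> : c0 + c1 *+ n = g - c1 by move: e1; rewrite mulrS; lia.
  by [].
have ne' : c0 != c1 by apply/eqP => E; apply: ne; rewrite E.
have H := two_le (fun d => cnt C n.+1 (g - d)%R) uC c0C c1C ne'.
have := leq_trans H (eq_leq h).
move: pos0 pos1; lia.
Qed.
Arguments cnt_one {C n g}.
Arguments cnt_top {C M} n.

Lemma mz (M:int) (a:nat) : M *+ a = M * a%:Z. Proof. by rewrite -mulr_natr natz. Qed.

Lemma cnt_interior (C : seq int) (m M c : int) n : uniq C -> m \in C -> M \in C -> c \in C ->
  m < c -> c < M -> M - m <= n.+1%:Z -> (2 <= cnt C n.+1 (c *+ n.+1))%N.
Proof.
move=> uC mC MC cC mc cM Hn.
have ne : c != M by lia.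
have H := two_le (fun d => cnt C n (c *+ n.+1 - d)%R) uC cC MC ne.
apply: (leq_trans _ H) => /=.
have A : (0 < cnt C n (c *+ n.+1 - c))%N.
  have := cnt_rep n cC (isT : (0 < cnt C 0 0)%N).
  rewrite add0n add0r.
  by have -> : c *+ n.+1 - c = c *+ n by rewrite mulrS; lia.
have [a ha] : exists a : nat, a%:Z = c - m - 1 by exists (absz (c - m - 1)%R); lia.
have [b hb] : exists b : nat, b%:Z = M - c by exists (absz (M - c)%R); lia.
have [d hd] : exists d : nat, d%:Z = n.+1%:Z - (M - m) by exists (absz (n.+1%:Z - (M - m))%R); lia.
have B : (0 < cnt C n (c *+ n.+1 - M))%N.
  have := cnt_rep d cC (cnt_rep b mC (cnt_rep a MC (isT : (0 < cnt C 0 0)%N))).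
  have -> : (0 + a + b + d = n)%N by lia.
  have -> : 0 + M *+ a + m *+ b + c *+ d = c *+ n.+1 - M.
    by rewrite !mz ha hb hd add0r; ring.
  by [].
by move: A B; lia.
Qed.

Arguments cnt_interior {C m M c n}.
Lemma cnt_const (F : fieldType) (charF0 : [pchar F] =i pred0)
  (D : {fset int} -> Prop) (HS : schur_partition F D) (C : {fset int}) (DC : D C) k :
  blockconst D (cnt C k).
Proof.
elim: k => [|k IH].
  move=> E g h DE gE hE /=.
  have HP : is_partition D by case: HS.
  have H0 : D [fset 0] by case: HS.
  case g0: (g == 0); case h0: (h == 0) => //.
    move/eqP: g0 => g0; subst g.
    have := blk_uniq HP DE H0 gE (fset11 _) => EE; subst E.
    by move: hE; rewrite in_fset1 h0.
  move/eqP: h0 => h0; subst h.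
  have := blk_uniq HP DE H0 hE (fset11 _) => EE; subst E.
  by move: gE; rewrite in_fset1 g0.
exact: (conv_const charF0 HS DC (sup C k) (fun x => @cnt_sup C k x) IH).
Qed.

Arguments cnt_const {F} charF0 {D} HS {C} DC k.
Lemma stepA (F : fieldType) (charF0 : [pchar F] =i pred0)
  (D : {fset int} -> Prop) (HS : schur_partition F D) (C : {fset int}) (DC : D C)
  (M m : int) (MC : M \in C) (mC : m \in C) (HM : forall c, c \in C -> c <= M)
  (Hm : forall c, c \in C -> m <= c) n (Hn : M - m <= n.+1%:Z)
  E (DE : D E) (hE : M *+ n.+1 \in E) g (gE : g \in E) :
  g = M *+ n.+1 \/ g = m *+ n.+1.
Proof.
have uC : uniq C := fset_uniq C.
have e1 : cnt C n.+1 g = 1%N.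
  rewrite (cnt_const charF0 HS DC n.+1 _ _ _ DE gE hE).
  exact: cnt_top.
have [c cC eg] := cnt_one uC e1.
rewrite eg in e1 *.
case: (c =P M) => [->|cM]; first by left.
case: (c =P m) => [->|cm]; first by right.
have := cnt_interior uC mC MC cC _ _ Hn.
have := HM c cC; have := Hm c cC.
move=> h1 h2 /(_ ltac:(lia) ltac:(lia)).
by rewrite e1.
Qed.
Arguments stepA {F} charF0 {D} HS {C} DC {M m} MC mC HM Hm {n} Hn {E} DE hE {g}.

Definition isTop (D : {fset int} -> Prop) (x : int) :=
  forall E, D E -> x \in E -> forall g, g \in E -> g <= x.
Definition isBot (D : {fset int} -> Prop) (x : int) :=
  forall E, D E -> x \in E -> forall g, g \in E -> x <= g.

Lemma seq_max (s : seq int) x : x \in s -> exists2 M, M \in s & forall y, y \in s -> y <= M.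
Proof.
elim: s x => [|a s IH] x //; rewrite inE => _.
case: s IH => [|b s] IH.
  by exists a; rewrite ?mem_head // => y; rewrite inE => /eqP ->.
have [M Ms HM] := IH b (mem_head _ _).
case: (leP a M) => h.
  by exists M; [rewrite inE Ms orbT | move=> y; rewrite inE => /orP [/eqP ->|/HM]].
exists a; first by rewrite mem_head.
move=> y; rewrite inE => /orP [/eqP ->|/HM] //; lia.
Qed.

Arguments seq_max {s x}.
Lemma seq_min (s : seq int) x : x \in s -> exists2 m, m \in s & forall y, y \in s -> m <= y.
Proof.
move=> xs; have [M Ms HM] := seq_max (map_f (fun y : int => - y) xs).
move/mapP: Ms => [m ms eM]; rewrite eM in HM; exists m => // y ys.
have := HM (- y) (map_f (fun y => - y) ys); lia.
Qed.

Arguments seq_min {s x}.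
Lemma top_neg F D (HS : schur_partition F D) x : isTop D x -> isBot D (- x).
Proof.
case: HS => _ _ Hinv _ Ht E DE xE g gE.
have DE' := Hinv E DE.
have h1 : x \in Defs.finv E by rewrite /Defs.finv -[x]opprK; apply: in_imfset.
have h2 : - g \in Defs.finv E by rewrite /Defs.finv; apply: in_imfset.
have := Ht _ DE' h1 _ h2; lia.
Qed.

Arguments top_neg {F D} HS {x}.
Lemma bot_neg F D (HS : schur_partition F D) x : isBot D x -> isTop D (- x).
Proof.
case: HS => _ _ Hinv _ Ht E DE xE g gE.
have DE' := Hinv E DE.
have h1 : x \in Defs.finv E by rewrite /Defs.finv -[x]opprK; apply: in_imfset.
have h2 : - g \in Defs.finv E by rewrite /Defs.finv; apply: in_imfset.
have := Ht _ DE' h1 _ h2; lia.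
Qed.

Arguments bot_neg {F D} HS {x}.
Lemma top0 F D (HS : schur_partition F D) : isTop D 0.
Proof.
case: HS => HP H0 _ _ E DE xE g gE.
have EE := blk_uniq HP DE H0 xE (fset11 _); subst E.
by move: gE; rewrite in_fset1 => /eqP ->.
Qed.

Arguments top0 {F D} HS.
Lemma top_add (F : fieldType) (charF0 : [pchar F] =i pred0) D (HS : schur_partition F D) x y :
  isTop D x -> isTop D y -> isTop D (x + y).
Proof.
move=> Tx Ty E DE sE g gE.
have HP : is_partition D by case: HS.
have Hcov : forall g : int, exists C, D C /\ g \in C by case: HP => _ [].
have [DX xX] := blkP Hcov x; have [DY yY] := blkP Hcov y.
set X := blk Hcov x in DX xX; set Y := blk Hcov y in DY yY.
have pos : (0 < pcn X Y (x + y))%N.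
  rewrite /pcn; apply: (leq_trans _ (one_le (fun c => \sum_(d <- Y) nat_of_bool ((c + d)%R == (x + y)%R))%N xX)).
  apply: (leq_trans _ (one_le (fun d => nat_of_bool (x + d == x + y)) yY)).
  by rewrite eqxx.
rewrite -(pcn_const charF0 HS DX DY _ _ _ DE gE sE) in pos.
move: pos => /sum_pos [c cX] /sum_pos [d dY].
case: (c + d =P g) => // <- _.
have := Tx _ DX xX _ cX; have := Ty _ DY yY _ dY; lia.
Qed.

Arguments top_add {F} charF0 {D} HS {x y}.
Lemma top_muln (F : fieldType) (charF0 : [pchar F] =i pred0) D (HS : schur_partition F D) x k :
  isTop D x -> isTop D (x *+ k).
Proof.
move=> Tx; elim: k => [|k IH]; first by rewrite mulr0n; apply: (top0 HS).
by rewrite mulrS; apply: (top_add charF0 HS).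
Qed.

Arguments top_muln {F} charF0 {D} HS {x} k.
Definition caseI D := exists q : int, 0 < q /\ isTop D (- q).

Lemma caseI_neg (F : fieldType) (charF0 : [pchar F] =i pred0) D (HS : schur_partition F D) x :
  caseI D -> 0 < x -> isTop D x -> isTop D (- x).
Proof.
move=> [q [q0 Tq]] x0 Tx.
have [k hk] : exists k : nat, k%:Z = x by exists (absz x); lia.
have [Q hQ] : exists Q : nat, Q%:Z = q by exists (absz q); lia.
have -> : - x = (- q) *+ k + x *+ (Q - 1).
  rewrite !mz hk.
  have -> : ((Q - 1)%N)%:Z = q - 1 by lia.
  ring.
by apply: (top_add charF0 HS); apply: (top_muln charF0 HS).
Qed.

Lemma allpos_caseI F D (HS : schur_partition F D) E x : D E -> x \in E ->
  (forall g, g \in E -> 0 < g) -> caseI D.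
Proof.
move=> DE xE Hp.
have HP : is_partition D by case: HS.
have [b bE Hb] := seq_min xE.
exists b; split; first exact: Hp.
apply: (bot_neg HS) => E' DE' bE' g gE'.
have EE := blk_uniq HP DE DE' bE bE'; subst E'.
exact: Hb.
Qed.

Lemma allneg_caseI F D (HS : schur_partition F D) E x : D E -> x \in E ->
  (forall g, g \in E -> g < 0) -> caseI D.
Proof.
move=> DE xE Hp.
have HP : is_partition D by case: HS.
have [t tE Ht] := seq_max xE.
exists (- t); split; first by have := Hp t tE; lia.
rewrite opprK => E' DE' tE' g gE'.
have EE := blk_uniq HP DE DE' tE tE'; subst E'.
exact: Ht.
Qed.
Arguments caseI_neg {F} charF0 {D} HS {x}.
Arguments allpos_caseI {F D} HS {E x}.
Arguments allneg_caseI {F D} HS {E x}.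

Lemma posmul (x : int) k : 0 < x -> 0 < x *+ k.+1.
Proof. by move=> h; rewrite pmulrn_lgt0. Qed.

Lemma negmul (x : int) k : x < 0 -> x *+ k.+1 < 0.
Proof. by move=> h; rewrite -oppr_gt0 -mulNrn pmulrn_lgt0 // oppr_gt0. Qed.

Lemma ar_w1 (w M X : int) : w + (M + (M + X)) = M -> w = - (M + X).
Proof. lia. Qed.
Lemma ar_w3 (w M X : int) : w + - (M + (M + X)) = M -> w = M + (M + (M + X)).
Proof. lia. Qed.
Lemma ar_c1 (M X c : int) : 0 < M -> 0 <= X -> -M <= c ->
  M + (M + X) + c = M + X \/ M + (M + X) + c = - (M + X) -> c = M \/ c = -M.
Proof. lia. Qed.
Lemma ar_c3 (M X c : int) : 0 < M -> 0 <= X -> -M <= c ->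
  M + (M + X) + c = M + (M + (M + X)) \/ M + (M + X) + c = - (M + (M + (M + X))) -> c = M \/ c = -M.
Proof. lia. Qed.

Theorem lemma3p1 (F : fieldType) (charF0 : [pchar F] =i pred0)
  (D : {fset int} -> Prop) (HS : schur_partition F D)
  (C : {fset int}) (HC : D C) (hz : (1 : int) \in C) :
  C = [fset (1 : int)] \/ C = [fset (1 : int); (-1 : int)].
Proof.
have HP : is_partition D by case: HS.
have H0 : D [fset 0] by case: HS.
have Hcov : forall g : int, exists C, D C /\ g \in C by case: HP => _ [].
have [M MC HM] := seq_max (hz : 1 \in (C : seq int)).
have [m mC Hm] := seq_min (hz : 1 \in (C : seq int)).
have M1 : 1 <= M := HM 1 hz.
have TM : isTop D M.
  move=> E DE ME g gE.
  have EE := blk_uniq HP DE HC ME MC; subst E.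
  exact: HM.
case: (classic (caseI D)) => [cI | nI].
  left.
  have Mp : 0 < M by lia.
  have := top_neg HS (caseI_neg charF0 HS cI Mp TM); rewrite opprK => BM.
  apply/fsetP => x; rewrite in_fset1; apply/idP/eqP => [xC| ->//].
  have := BM C HC MC x xC; have := HM x xC; have := BM C HC MC 1 hz; lia.
right.
have C0 : 0 \notin C.
  apply/negP => h0; have EE := blk_uniq HP HC H0 h0 (fset11 _); subst C.
  by move: hz; rewrite in_fset1.
have m0 : m < 0.
  case: (ltP m 0) => // hm0; exfalso; apply: nI.
  apply: (allpos_caseI HS HC hz) => g gC.
  have := Hm g gC; have : g != 0 by apply: contraNneq C0 => <-.
  lia.
set n0 := absz (M - m).
have PK : forall k E, (n0 <= k)%N -> D E -> M *+ k.+1 \in E ->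
    forall g, (g \in E) = ((g == M *+ k.+1) || (g == m *+ k.+1)).
  move=> k E hk DE hE.
  have Hn : M - m <= k.+1%:Z by rewrite /n0 in hk; lia.
  have SA := stepA charF0 HS HC MC mC HM Hm Hn DE hE.
  have mE : m *+ k.+1 \in E.
    apply: contraT => nmE; exfalso; apply: nI.
    apply: (allpos_caseI HS DE hE) => g gE.
    case: (SA g gE) => eg; first by rewrite eg; apply: posmul; lia.
    by move: nmE; rewrite -eg gE.
  move=> g; apply/idP/idP.
    by move=> /SA [->|->]; rewrite eqxx ?orbT.
  by case/orP => /eqP ->.
set a := M *+ n0.+2.
set b := m *+ n0.+2.
have a0 : 0 < a by apply: posmul; lia.
have b0 : b < 0 by apply: negmul.
have ab : a != b by lia.
have [DP aP] := blkP Hcov a.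
set P := blk Hcov a in DP aP.
have hP := PK n0.+1 P (leqnSn _) DP aP.
have Hperm : perm_eq (P : seq int) [:: a; b].
  apply: uniq_perm; first exact: fset_uniq.
    by rewrite /= inE ab.
  by move=> x; rewrite -[x \in (P : seq int)]/(x \in P) hP !inE ?orbF.
have pcnP : forall g, pcn P P g =
   (nat_of_bool ((a + a)%R == g) + nat_of_bool ((a + b)%R == g) +
   (nat_of_bool ((b + a)%R == g) + nat_of_bool ((b + b)%R == g)))%N.
  move=> g; rewrite /pcn (perm_big _ Hperm) /=.
  under eq_bigr => c _ do rewrite (perm_big _ Hperm).
  by rewrite !big_cons !big_nil /= !addn0.
have [DQ abQ] := blkP Hcov (a + b).
set Q := blk Hcov (a + b) in DQ abQ.
have HQ : forall g, g \in Q -> g = a + b.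
  move=> g gQ.
  have := pcn_const charF0 HS DP DP _ _ _ DQ gQ abQ.
  rewrite !pcnP; lia.
have ab0 : a + b = 0.
  case: (ltgtP (a + b) 0) => // h; exfalso; apply: nI.
    by apply: (allneg_caseI HS DQ abQ) => g /HQ ->.
  by apply: (allpos_caseI HS DQ abQ) => g /HQ ->.
have mM : m = - M.
  move: ab0; rewrite /a /b -mulrnDl => /eqP.
  rewrite mz mulf_eq0 => /orP [/eqP h|]; first lia.
  by [].
have [DP1 aP1] := blkP Hcov (M *+ n0.+1).
set P1 := blk Hcov (M *+ n0.+1) in DP1 aP1.
have hP1 := PK n0 P1 (leqnn _) DP1 aP1.
have [DP3 aP3] := blkP Hcov (M *+ n0.+3).
set P3 := blk Hcov (M *+ n0.+3) in DP3 aP3.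
have hP3 := PK n0.+2 P3 (leqW (leqnSn _)) DP3 aP3.
have Mpos : 0 < M by lia.
have X0 : 0 <= M *+ n0 by rewrite mulrn_wge0 //; lia.
have e1 : M *+ n0.+1 = M + M *+ n0 by rewrite mulrS.
have e2 : a = M + (M + M *+ n0) by rewrite /a !mulrS.
have e3 : M *+ n0.+3 = M + (M + (M + M *+ n0)) by rewrite !mulrS.
have eb : b = - a by rewrite /b /a mM mulNrn.
have em1 : m *+ n0.+1 = - (M *+ n0.+1) by rewrite mM mulNrn.
have em3 : m *+ n0.+3 = - (M *+ n0.+3) by rewrite mM mulNrn.
have Cpm : forall c, c \in C -> c = M \/ c = - M.
  move=> c cC.
  have [DW wW] := blkP Hcov (a + c).
  set W := blk Hcov (a + c) in DW wW.
  have pc : (0 < pcn W P c)%N.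
    rewrite /pcn; apply: (leq_trans _ (one_le (fun w => \sum_(d <- P) nat_of_bool ((w + d)%R == c))%N wW)).
    have bP : b \in P by rewrite hP eqxx orbT.
    apply: (leq_trans _ (one_le (fun d => nat_of_bool ((a + c + d)%R == c)) bP)).
    by rewrite eb addrAC subrr add0r eqxx.
  rewrite (pcn_const charF0 HS DW DP _ _ _ HC cC MC) in pc.
  move: pc => /sum_pos [w wW'] /sum_pos [y yP].
  case: (w + y =P M) => // ewy _.
  have := Hm c cC; have := HM c cC; rewrite mM => hc1 hc2.
  move: yP; rewrite hP => /orP [/eqP ey|/eqP ey].
    have ew : w = m *+ n0.+1.
      by rewrite em1 e1; apply: ar_w1; rewrite -e2 /a -ey.
    have wP1 : w \in P1 by rewrite hP1 ew eqxx orbT.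
    have EE := blk_uniq HP DW DP1 wW' wP1.
    have : a + c \in P1 by rewrite -EE.
    rewrite hP1 em1 e1 e2 => /orP [/eqP h|/eqP h]; apply: (ar_c1 _ _ _ Mpos X0 hc2); by [left|right].
  have ew : w = M *+ n0.+3.
    by rewrite e3; apply: ar_w3; rewrite -e2 -eb /b -ey.
  have wP3 : w \in P3 by rewrite hP3 ew eqxx.
  have EE := blk_uniq HP DW DP3 wW' wP3.
  have : a + c \in P3 by rewrite -EE.
  rewrite hP3 em3 e3 e2 => /orP [/eqP h|/eqP h]; apply: (ar_c3 _ _ _ Mpos X0 hc2); by [left|right].
have M_1 : M = 1 by case: (Cpm 1 hz); lia.
apply/fsetP => x; rewrite !inE; apply/idP/idP.
  by move=> /Cpm [->|->]; rewrite M_1 eqxx ?orbT.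
case/orP => /eqP ->; first exact: hz.
by rewrite -M_1 -mM.
Qed.
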